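(* Let $L\in\mathbb Z^+$ and let $\mathcal C$ be a linear $[n,k]$ MDS code over $F$ with $k<n$. Write $n-k=(L+1)u+r$ with $u\in\mathbb Z_{\ge0}$ and $r\in\{1,2,\dots,L+1\}$, and suppose $$L\le\binom{k-1+u+r}{k-1}.$$ If $\mathcal C$ is $(\tau,L)$-list decodable (for some $\tau\in\mathbb Z_{\ge0}$), then $\tau\le\frac{L(n-k)}{L+1}$.
   Context: $F=\mathrm{GF}(q)$. For $L\in\mathbb Z^+$ and $\tau\in\mathbb Z_{\ge0}$, a code $\mathcal C\subseteq F^n$ is $(\tau,L)$-list decodable if for every $y\in F^n$ at most $L$ codewords of $\mathcal C$ lie at Hamming distance at most $\tau$ from $y$. *)

(* Defs.v *)
From HB Require Import structures.
From mathcomp Require Import all_boot all_order all_algebra.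
Set Implicit Arguments. Unset Strict Implicit. Unset Printing Implicit Defensive.
Import GRing.Theory.

(* Words of length n over F are row vectors 'rV[F]_n; linear codes are
   subspaces {vspace 'rV[F]_n}. *)

Definition hamming (F : finFieldType) (n : nat) (x y : 'rV[F]_n) : nat :=
  #|[set i : 'I_n | x ord0 i != y ord0 i]|.

Definition hweight (F : finFieldType) (n : nat) (x : 'rV[F]_n) : nat :=
  hamming x 0%R.

Definition list_decodable (F : finFieldType) (n : nat)
    (C : {pred 'rV[F]_n}) (tau L : nat) : Prop :=
  forall y : 'rV[F]_n, #|[set c : 'rV[F]_n | (c \in C) && (hamming c y <= tau)]| <= L.

Definition has_min_distance (F : finFieldType) (n : nat)
    (C : {vspace 'rV[F]_n}) (d : nat) : Prop :=
  (forall c, c \in C -> c != 0%R -> d <= hweight c) /\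
  (exists2 c, (c \in C) && (c != 0%R) & hweight c = d).

Definition is_MDS (F : finFieldType) (n : nat) (C : {vspace 'rV[F]_n}) (k : nat) : Prop :=
  \dim C = k /\ has_min_distance C (n - k + 1).

(* Main.v *)
Require Import Defs.
From HB Require Import structures.
From mathcomp Require Import all_boot all_order all_algebra zify.
Import GRing.Theory Num.Theory.
Local Open Scope ring_scope.

Lemma card_itv n a b : (a <= b <= n)%N -> #|[set j : 'I_n | (a <= j < b)%N]| = (b - a)%N.
Proof.
elim: b => [|b IH] /andP[hab hbn].
  have -> : a = 0%N by lia.
  by apply/eqP; rewrite cards_eq0; apply/eqP/setP => j; rewrite !inE ltn0 andbF.
case: (ltnP b a) => hba.
  have -> : a = b.+1 by lia.
  rewrite subnn; apply/eqP; rewrite cards_eq0; apply/eqP/setP => j; rewrite !inE; lia.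
have -> : [set j : 'I_n | (a <= j < b.+1)%N] = (Ordinal hbn) |: [set j : 'I_n | (a <= j < b)%N].
  apply/setP => j; rewrite !inE -val_eqE /=; lia.
rewrite cardsU1 IH; last lia.
by rewrite inE /= ltnn andbF /=; lia.
Qed.

Lemma zeros_bound (F : finFieldType) n (C : {vspace 'rV[F]_n}) k c :
  is_MDS C k -> c \in C -> c != 0 -> (#|[set j : 'I_n | c ord0 j == 0%R]| <= k - 1)%N.
Proof.
move=> [_ [H _]] cC c0; have := H c cC c0; rewrite /hweight /hamming.
have -> : [set i : 'I_n | c ord0 i != (0 : 'rV[F]_n) ord0 i] = ~: [set j : 'I_n | c ord0 j == 0%R].
  by apply/setP => j; rewrite !inE mxE.
have := cardsC [set j : 'I_n | c ord0 j == 0%R].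
rewrite card_ord; lia.
Qed.

Lemma exists_vanish (F : finFieldType) n (C : {vspace 'rV[F]_n}) k (S : {set 'I_n}) :
  \dim C = k -> (#|S| < k)%N -> exists2 c, c \in C & (c != 0) && [forall j in S, c ord0 j == 0%R].
Proof.
move=> dC hS.
pose f (c : 'rV[F]_n) : 'rV[F]_#|S| := \row_(i < #|S|) c ord0 (enum_val i).
have lf : linear f.
  by move=> a x y; apply/rowP => i; rewrite !mxE.
pose g : {linear 'rV[F]_n -> 'rV[F]_#|S|} := HB.pack f (GRing.isLinear.Build _ _ _ _ f lf).
pose h := linfun g.
have := limg_ker_dim h C.
have : (\dim (h @: C) <= #|S|)%N.
  by apply: leq_trans (dimvS (subvf _)) _; rewrite dimvf /dim /= mul1n.
move=> h1 h2.
have : (C :&: lker h)%VS != 0%VS.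
  apply/negP; rewrite -dimv_eq0 => /eqP h0; change (\dim (C :&: lker h) = 0%N) in h0.
  by move: h2; rewrite h0 add0n => h2; move: h1; rewrite h2 dC leqNgt hS.
rewrite -vpick0 => hn.
have := memv_pick (C :&: lker h)%VS; rewrite memv_cap => /andP[cC ck].
exists (vpick (C :&: lker h)%VS) => //; rewrite hn /=.
apply/forall_inP => j jS.
move: ck; rewrite memv_ker lfunE /= => /eqP /rowP /(_ (enum_rank_in jS j)).
by rewrite !mxE enum_rankK_in // => ->.
Qed.
Lemma vanish1 (F : finFieldType) n (C : {vspace 'rV[F]_n}) k (S : {set 'I_n}) (j0 : 'I_n) :
  is_MDS C k -> #|S| = (k - 1)%N -> (0 < k)%N -> j0 \notin S ->
  exists2 c, c \in C & [forall j in S, c ord0 j == 0%R] && (c ord0 j0 == 1).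
Proof.
move=> MDS cS k0 j0S.
have [c cC /andP[c0 cS0]] := @exists_vanish F n C k S (proj1 MDS) (ltac:(lia)).
have cj0 : c ord0 j0 != 0.
  apply/negP => /eqP cj.
  have := @zeros_bound F n C k c MDS cC c0.
  have : (j0 |: S) \subset [set j : 'I_n | c ord0 j == 0%R].
    apply/subsetP => j; rewrite !inE => /orP[/eqP -> | jS]; first by rewrite cj.
    exact: (forall_inP cS0).
  move/subset_leq_card; rewrite cardsU1 j0S cS; lia.
exists ((c ord0 j0)^-1 *: c); first exact: memvZ.
apply/andP; split; last by rewrite mxE mulVf.
apply/forall_inP => j jS; rewrite mxE (eqP (forall_inP cS0 j jS)) mulr0 //.
Qed.
Theorem mainTheorem4 (F : finFieldType) (n k L u r tau : nat)
    (C : {vspace 'rV[F]_n}) :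
  (0 < L)%N ->
  is_MDS C k ->
  (k < n)%N ->
  (n - k = (L + 1) * u + r)%N ->
  (1 <= r <= L + 1)%N ->
  (L <= 'C(k - 1 + u + r, k - 1))%N ->
  list_decodable (fun c => c \in C) tau L ->
  (tau%:R : rat) <= (L * (n - k))%:R / (L + 1)%:R.
Proof.
move=> L0 MDS kn hnk hr hL LD.
have k0 : (0 < k)%N.
  case: (MDS) => _ [_ [c _ hw]].
  have := max_card [set i : 'I_n | c ord0 i != (0 : 'rV[F]_n) ord0 i].
  rewrite card_ord -[X in (X <= _)%N -> _]/(hweight c) hw; lia.
suff htau : (tau < L * u + r)%N.
  rewrite ler_pdivlMr ?ltr0n ?addn1 // -natrM ler_nat.
  have h1 : (tau.+1 * L.+1 <= (L * u + r) * L.+1)%N by rewrite leq_mul2r htau orbT.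
  rewrite hnk; move: h1; rewrite !mulnDl !mulnDr !mulSn !mulnS; nia.
rewrite ltnNge; apply/negP => htau.
set m := (k - 1 + u + r)%N.
have {}hL : (L <= 'C(m, k - 1))%N by exact: hL.
have hn : n = (m.+1 + L * u)%N by lia.
have mn : (m < n)%N by lia.
pose pm : 'I_n := Ordinal mn.
pose A := [set j : 'I_n | (0 <= j < m)%N].
have cA : #|A| = m by rewrite card_itv ?subn0 //; lia.
pose D := enum [set S : {set 'I_n} | S \subset A & #|S| == (k - 1)%N].
have sD : size D = 'C(m, k - 1) by rewrite -cardE cards_draws cA.
pose S i := nth set0 D i.
have SP i : (i < L)%N -> S i \subset A /\ #|S i| = (k - 1)%N.
  move=> hi; have : S i \in D by apply: mem_nth; rewrite sD; lia.
  by rewrite mem_enum inE => /andP[-> /eqP].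
have Sinj i j : (i < L)%N -> (j < L)%N -> S i = S j -> i = j.
  move=> hi hj /eqP; rewrite nth_uniq ?enum_uniq ?sD //; [by move/eqP| lia | lia].
pose P (S : {set 'I_n}) (c : 'rV[F]_n) := [&& c \in C, [forall j in S, c ord0 j == 0%R] & c ord0 pm == 1].
pose cw S := odflt 0 [pick c | P S c].
pose cc i := cw (S i).
have ccP i : (i < L)%N -> P (S i) (cc i).
  move=> hi; rewrite /cc /cw; case: pickP => [c //|H0].
  have [SA cS] := SP i hi.
  have pS : pm \notin S i.
    apply/negP => /(subsetP SA); rewrite inE /=; lia.
  have [c cC /andP[c1 c2]] := @vanish1 F n C k (S i) pm MDS cS k0 pS.
  by have := H0 c; rewrite /P cC c1 c2.
have cc_ne0 i : (i < L)%N -> cc i != 0.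
  move=> hi; apply/eqP => e; have := ccP i hi; rewrite e /P mxE => /and3P[_ _].
  by rewrite eq_sym oner_eq0.
pose y : 'rV[F]_n := \row_(j < n) (if (j < m)%N then 0 else if (j == m :> nat) then 1
                                   else cc ((j - m.+1) %/ u)%N ord0 j).
have := LD y.
set X := [set c : 'rV[F]_n | _].
pose Y := 0 |: [set cc (nat_of_ord i) | i : 'I_L].
suff [YX cY] : Y \subset X /\ #|Y| = L.+1.
  by move/(leq_trans (subset_leq_card YX)); rewrite cY ltnn.
split; last first.
  rewrite cardsU1 card_imset ?card_ord.
    case: imsetP => //= -[i _ e]; have := cc_ne0 i (ltn_ord i); by rewrite -e eqxx.
  move=> i j e; apply: val_inj; apply: Sinj; try exact: ltn_ord.
  apply/eqP; apply/negPn/negP => ne.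
  have [SAi cSi] := SP i (ltn_ord i).
  have [SAj cSj] := SP j (ltn_ord j).
  have /and3P[ci zi _] := ccP i (ltn_ord i).
  have /and3P[_ zj _] := ccP j (ltn_ord j).
  rewrite -e in zj.
  have := @zeros_bound F n C k (cc i) MDS ci (cc_ne0 i (ltn_ord i)).
  have [x xj xi] : exists2 x, x \in S j & x \notin S i.
    case: (boolP (S j \subset S i)) => sji; last by apply/subsetPn.
    have : S j == S i by rewrite eqEcard sji cSi cSj leqnn.
    by rewrite eq_sym (negbTE ne).
  have : (x |: S i) \subset [set j0 : 'I_n | cc i ord0 j0 == 0%R].
    apply/subsetP => z; rewrite !inE => /orP[/eqP -> | zS].
      exact: (forall_inP zj).
    exact: (forall_inP zi).
  move/subset_leq_card; rewrite cardsU1 xi cSi /= => a b; have := leq_trans a b; lia.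
apply/subsetP => c; rewrite !inE => /orP[/eqP -> | /imsetP[i _ ->]].
  rewrite mem0v /=.
  apply: (@leq_trans #|~: A|).
    apply: subset_leq_card; apply/subsetP => j; rewrite !inE !mxE.
    by case: (ltnP j m) => //= _; rewrite eqxx.
  have := cardsC A; rewrite cA card_ord; lia.
have hi := ltn_ord i.
have [SA cS] := SP i hi.
have /and3P[ci zi pi] := ccP i hi.
rewrite ci /=.
pose B1 := [set j : 'I_n | (m <= j < m.+1)%N].
pose B2 := [set j : 'I_n | (m.+1 + i * u <= j < m.+1 + i * u + u)%N].
pose W := S i :|: (B1 :|: B2).
have hiu : (i.+1 * u <= L * u)%N by rewrite leq_mul2r hi orbT.
rewrite mulSn in hiu.
have cW : #|W| = (k + u)%N.
  have e1 : B1 :&: B2 = set0 by apply/setP => j; rewrite !inE; lia.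
  have e2 : S i :&: (B1 :|: B2) = set0.
    apply/setP => j; rewrite !inE; case: (boolP (j \in S i)) => // jS.
    have := subsetP SA j jS; rewrite !inE; lia.
  rewrite /W cardsU e2 cards0 subn0 cardsU e1 cards0 subn0 !card_itv; lia.
apply: (@leq_trans #|~: W|).
  apply: subset_leq_card; apply/subsetP => j; rewrite inE => hj; rewrite inE.
  apply: contra hj; rewrite !inE =>  /orP[jS | /orP[hj | hj]].
  - rewrite mxE; have := subsetP SA j jS; rewrite inE => /andP[_ ->].
    by rewrite (eqP (forall_inP zi j jS)).
  - have ejm : j = pm by apply: val_inj => /=; lia.
    by rewrite ejm mxE /= ltnn eqxx (eqP pi).
  - rewrite mxE (_ : (j < m)%N = false); last lia.
    rewrite (_ : (j == m :> nat) = false); last lia.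
    rewrite (_ : (j - m.+1) = i * u + (j - m.+1 - i * u))%N; last lia.
    rewrite divnMDl ?divn_small ?addn0 //; lia.
have := cardsC W; rewrite cW card_ord; lia.
Qed.
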